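(* Let $m,n\ge1$ be integers and $f\in C[0,1]$, and let $I_{n,m}(f)=\frac{1}{m(n+1)}\sum_{k=1}^m\sum_{i=0}^n f\left(\frac{kn-n+i}{mn}\right)$. Then (i) $\left|\int_0^1f(x)\,dx-I_{n,m}(f)\right|\le 2K\left(\frac{1}{24m^2n},f;C^0[0,1],C^2[0,1]\right)$; (ii) $\left|\int_0^1f(x)\,dx-I_{n,m}(f)\right|\le\frac94\,\omega_2\left(f;\frac{1}{m\sqrt{6n}}\right)$.
   Context: $I_{n,m}(f)$ equals $\int_0^1\overline{B}_{n,m}(f;x)\,dx$ for the composite Bernstein operator $\overline{B}_{n,m}(f;x)=B_n^{[\frac{k-1}{m},\frac km]}(f;x)$ on $\left[\frac{k-1}{m},\frac km\right]$, where $B_n^{[a,b]}(f;x)=\frac{1}{(b-a)^n}\sum_{i=0}^n\binom ni(x-a)^i(b-x)^{n-i}f(a+i\frac{b-a}{n})$. The $K$-functional is $K(\delta,f;C^0[0,1],C^2[0,1])=\inf\{\|f-g\|_\infty+\delta\|g''\|_\infty: g\in C^2[0,1]\}$ for $\delta\ge0$. $\omega_2(f,\delta)=\sup\{|f(x-h)-2f(x)+f(x+h)|: x\pm h\in[0,1],\ |h|\le\delta\}$. *)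

(* Defs.v *)
From Stdlib Require Import Reals.
From Coquelicot Require Import Coquelicot.
Open Scope R_scope.

Definition I01 (x : R) : Prop := 0 <= x <= 1.

Definition cont01 (f : R -> R) : Prop :=
  forall x, I01 x -> filterlim f (within I01 (locally x)) (locally (f x)).

Definition has_deriv01 (g dg : R -> R) : Prop :=
  forall x, I01 x ->
    filterlim (fun h => (g (x + h) - g x) / h)
      (within (fun h => h <> 0 /\ I01 (x + h)) (locally 0)) (locally (dg x)).

Definition C2_01 (g g1 g2 : R -> R) : Prop :=
  has_deriv01 g g1 /\ has_deriv01 g1 g2 /\ cont01 g2.

Definition supnorm01 (f : R -> R) : R :=
  real (Lub_Rbar (fun y => exists x, I01 x /\ y = Rabs (f x))).

Definition Kfun (delta : R) (f : R -> R) : R :=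
  real (Glb_Rbar (fun v => exists g g1 g2, C2_01 g g1 g2 /\
          v = supnorm01 (fun x => f x - g x) + delta * supnorm01 g2)).

Definition omega2 (f : R -> R) (delta : R) : R :=
  real (Lub_Rbar (fun y => exists x h, I01 (x - h) /\ I01 (x + h) /\
          Rabs h <= delta /\ y = Rabs (f (x - h) - 2 * f x + f (x + h)))).

Definition Inm (n m : nat) (f : R -> R) : R :=
  / (INR m * (INR n + 1)) *
  sum_n (fun k' => let k := (k' + 1)%nat in
     sum_n (fun i => f ((INR k * INR n - INR n + INR i) / (INR m * INR n))) n)
   (m - 1).

(* Main.v *)
Require Import Defs.
From Stdlib Require Import Reals Lra Lia.
From Coquelicot Require Import Coquelicot.
Open Scope R_scope.

Lemma ball_R (x e y : R) : ball x e y <-> Rabs (y - x) < e.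
Proof. split; intro H; exact H. Qed.

Definition cl (x : R) : R := Rmax 0 (Rmin 1 x).

Lemma cl_I01 x : I01 (cl x).
Proof. unfold cl, I01, Rmax, Rmin. repeat destruct Rle_dec; lra. Qed.

Lemma cl_id x : I01 x -> cl x = x.
Proof. unfold cl, I01, Rmax, Rmin. intros. repeat destruct Rle_dec; lra. Qed.

Lemma cl_lip x y : Rabs (cl y - cl x) <= Rabs (y - x).
Proof.
  unfold cl, Rmax, Rmin, Rabs. repeat destruct Rle_dec; repeat destruct Rcase_abs; lra.
Qed.

Lemma locally_ex (x : R) (P : R -> Prop) :
  locally x P -> exists d, 0 < d /\ forall y, Rabs (y - x) < d -> P y.
Proof. intros [d Hd]. exists d. split. apply cond_pos. intros y Hy. apply Hd. exact Hy. Qed.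

Lemma cont01_eps f x : cont01 f -> I01 x ->
  forall eps, 0 < eps -> exists d, 0 < d /\ forall y, I01 y -> Rabs (y - x) < d -> Rabs (f y - f x) < eps.
Proof.
  intros Hf Hx eps He.
  pose proof (proj1 (filterlim_locally _ _) (Hf x Hx) (mkposreal eps He)) as H.
  destruct (locally_ex _ _ H) as [d [Hd Hd']].
  exists d; split; auto. intros y Hy Hyx. apply (Hd' y Hyx Hy).
Qed.

Lemma cont_cl f : cont01 f -> forall x, continuity_pt (fun y => f (cl y)) x.
Proof.
  intros Hf x. apply continuity_pt_filterlim. apply filterlim_locally.
  intros eps.
  destruct (cont01_eps f (cl x) Hf (cl_I01 x) eps (cond_pos eps)) as [d [Hd H]].
  exists (mkposreal d Hd). intros y Hy. apply ball_R. apply ball_R in Hy. simpl in Hy.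
  apply H. apply cl_I01. eapply Rle_lt_trans. apply cl_lip. exact Hy.
Qed.

Lemma cont_cl' f : cont01 f -> forall x, continuous (fun y => f (cl y)) x.
Proof. intros Hf x. apply continuity_pt_filterlim. apply cont_cl; auto. Qed.

Lemma bounded01 phi : cont01 phi -> exists B, forall x, I01 x -> Rabs (phi x) <= B.
Proof.
  intros H.
  assert (Hc : forall c, 0 <= c <= 1 -> continuity_pt (fun y => phi (cl y)) c)
    by (intros; apply cont_cl; auto).
  destruct (continuity_ab_maj _ 0 1 ltac:(lra) Hc) as [M [HM _]].
  destruct (continuity_ab_min _ 0 1 ltac:(lra) Hc) as [mi [Hm _]].
  exists (Rmax (Rabs (phi (cl M))) (Rabs (phi (cl mi)))).
  intros x Hx. specialize (HM x Hx). specialize (Hm x Hx). simpl in *.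
  rewrite (cl_id x Hx) in HM, Hm.
  unfold Rmax, Rabs. repeat destruct Rle_dec; repeat destruct Rcase_abs; lra.
Qed.

Lemma lub_real (S : R -> Prop) y B : S y -> (forall z, S z -> z <= B) ->
  y <= real (Lub_Rbar S) /\ real (Lub_Rbar S) <= B.
Proof.
  intros Hy HB. destruct (Lub_Rbar_correct S) as [Hub Hl].
  assert (H1 : Rbar_le (Finite y) (Lub_Rbar S)) by (apply Hub; auto).
  assert (H2 : Rbar_le (Lub_Rbar S) (Finite B)) by (apply Hl; intros z Hz; apply HB; auto).
  destruct (Lub_Rbar S); simpl in *; try contradiction; lra.
Qed.

Lemma glb_real (S : R -> Prop) v L : S v -> (forall z, S z -> L <= z) ->
  L <= real (Glb_Rbar S).
Proof.
  intros Hv HL. destruct (Glb_Rbar_correct S) as [Hlb Hg].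
  assert (H1 : Rbar_le (Glb_Rbar S) (Finite v)) by (apply Hlb; auto).
  assert (H2 : Rbar_le (Finite L) (Glb_Rbar S)) by (apply Hg; intros z Hz; apply HL; auto).
  destruct (Glb_Rbar S); simpl in *; try contradiction; lra.
Qed.

Lemma supnorm_ge phi x : cont01 phi -> I01 x -> Rabs (phi x) <= supnorm01 phi.
Proof.
  intros H Hx. destruct (bounded01 phi H) as [B HB]. unfold supnorm01.
  refine (proj1 (lub_real _ (Rabs (phi x)) B _ _)).
  - exists x; auto.
  - intros z [y [Hy ->]]. apply HB; auto.
Qed.

Lemma omega2_ge f d c s : cont01 f -> I01 (c - s) -> I01 (c + s) -> Rabs s <= d ->
  Rabs (f (c - s) - 2 * f c + f (c + s)) <= omega2 f d.
Proof.
  intros H H1 H2 Hs. destruct (bounded01 f H) as [B HB]. unfold omega2.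
  refine (proj1 (lub_real _ _ (4 * B) _ _)).
  - exists c, s. split; [exact H1|split; [exact H2|split; [exact Hs|reflexivity]]].
  - intros z [x [h [Ha [Hb [Hh ->]]]]].
    assert (Hx : I01 x) by (unfold I01 in *; lra).
    pose proof (HB _ Ha) as A1. pose proof (HB _ Hb) as A2. pose proof (HB _ Hx) as A3.
    apply Rabs_le_between in A1, A2, A3. apply Rabs_le. lra.
Qed.

Lemma omega2_nonneg f d : cont01 f -> 0 <= d -> 0 <= omega2 f d.
Proof.
  intros H Hd. eapply Rle_trans; [apply Rabs_pos|].
  apply (omega2_ge f d 0 0); auto; unfold I01; try rewrite Rabs_R0; lra.
Qed.

Lemma deriv01_eps g g1 x : has_deriv01 g g1 -> I01 x ->
  forall eps, 0 < eps -> exists d, 0 < d /\ forall h, h <> 0 -> Rabs h < d -> I01 (x + h) ->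
    Rabs ((g (x + h) - g x) / h - g1 x) < eps.
Proof.
  intros Hg Hx eps He.
  pose proof (proj1 (filterlim_locally _ _) (Hg x Hx) (mkposreal eps He)) as H.
  destruct (locally_ex _ _ H) as [d [Hd Hd']].
  exists d; split; auto. intros h Hh0 Hh Hxh.
  apply (Hd' h). rewrite Rminus_0_r; auto. split; auto.
Qed.

Lemma deriv01_cont g g1 : has_deriv01 g g1 -> cont01 g.
Proof.
  intros Hg x Hx. apply filterlim_locally. intros eps.
  destruct (deriv01_eps g g1 x Hg Hx 1 ltac:(lra)) as [d [Hd H]].
  assert (Hp : 0 < Rmin d (eps / (Rabs (g1 x) + 1))).
  { apply Rmin_pos; auto. apply Rdiv_lt_0_compat. apply cond_pos.
    pose proof (Rabs_pos (g1 x)); lra. }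
  exists (mkposreal _ Hp). intros y Hy HIy. apply ball_R. apply ball_R in Hy. simpl in Hy.
  destruct (Req_dec (y - x) 0) as [E|E].
  { replace y with x by lra. rewrite Rminus_diag, Rabs_R0. apply cond_pos. }
  assert (Hlt : Rabs (y - x) < d) by (eapply Rlt_le_trans; [exact Hy| apply Rmin_l]).
  specialize (H (y - x) E Hlt). rewrite (Rplus_minus x y) in H.
  specialize (H HIy).
  assert (Hq : Rabs ((g y - g x) / (y - x)) <= Rabs (g1 x) + 1).
  { pose proof (Rabs_triang_inv ((g y - g x) / (y - x)) (g1 x)). lra. }
  replace (g y - g x) with ((g y - g x) / (y - x) * (y - x)) by (field; auto).
  rewrite Rabs_mult.
  assert (Hy2 : Rabs (y - x) < eps / (Rabs (g1 x) + 1))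
    by (eapply Rlt_le_trans; [exact Hy| apply Rmin_r]).
  assert (Hpos : 0 < Rabs (g1 x) + 1) by (pose proof (Rabs_pos (g1 x)); lra).
  apply (Rmult_lt_compat_r (Rabs (g1 x) + 1)) in Hy2; auto.
  unfold Rdiv in Hy2. rewrite Rmult_assoc, Rinv_l in Hy2 by lra. rewrite Rmult_1_r in Hy2.
  pose proof (Rabs_pos (y - x)). pose proof (Rabs_pos ((g y - g x) / (y - x))).
  nra.
Qed.

Lemma deriv01_int g g1 x : has_deriv01 g g1 -> 0 < x < 1 ->
  is_derive (fun y => g (cl y)) x (g1 x).
Proof.
  intros Hg Hx. apply is_derive_Reals. intros eps He.
  destruct (deriv01_eps g g1 x Hg ltac:(unfold I01; lra) eps He) as [d [Hd H]].
  assert (Hp : 0 < Rmin d (Rmin x (1 - x))) by (repeat apply Rmin_pos; lra).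
  exists (mkposreal _ Hp). intros h Hh0 Hh. simpl in Hh.
  assert (Hh1 : Rabs h < d) by (eapply Rlt_le_trans; [exact Hh|apply Rmin_l]).
  assert (Hh2 : Rabs h < Rmin x (1 - x)) by (eapply Rlt_le_trans; [exact Hh|apply Rmin_r]).
  assert (Hm1 := Rmin_l x (1 - x)). assert (Hm2 := Rmin_r x (1 - x)).
  apply Rabs_lt_between in Hh2.
  assert (HI : I01 (x + h)) by (unfold I01; lra).
  rewrite (cl_id (x + h)) by auto. rewrite (cl_id x) by (unfold I01; lra).
  apply H; auto.
Qed.

Lemma sumS (a : nat -> R) n : @eq R (sum_n a (S n)) (sum_n a n + a (S n)).
Proof. rewrite sum_Sn. reflexivity. Qed.
Lemma sum0 (a : nat -> R) : @eq R (sum_n a 0) (a 0%nat).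
Proof. apply sum_O. Qed.

Lemma sum_ext (a b : nat -> R) n : (forall i, (i <= n)%nat -> a i = b i) -> @eq R (sum_n a n) (sum_n b n).
Proof.
  induction n; intros H. rewrite !sum0; apply H; lia.
  rewrite !sumS, IHn by (intros; apply H; lia). rewrite H by lia. reflexivity.
Qed.

Lemma sum_plus (a b : nat -> R) n : @eq R (sum_n (fun i => a i + b i) n) (sum_n a n + sum_n b n).
Proof. induction n. - rewrite !sum0; reflexivity. - rewrite !sumS, IHn. ring. Qed.
Lemma sum_minus (a b : nat -> R) n : @eq R (sum_n (fun i => a i - b i) n) (sum_n a n - sum_n b n).
Proof. induction n. - rewrite !sum0; reflexivity. - rewrite !sumS, IHn. ring. Qed.
Lemma sum_scal (c : R) (a : nat -> R) n : @eq R (sum_n (fun i => c * a i) n) (c * sum_n a n).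
Proof. induction n. - rewrite !sum0; reflexivity. - rewrite !sumS, IHn. ring. Qed.
Lemma sum_const (c : R) n : @eq R (sum_n (fun _ => c) n) (INR (S n) * c).
Proof. induction n. - rewrite sum0; simpl; ring. - rewrite sumS, IHn, (S_INR (S n)). ring. Qed.
Lemma sum_le (a b : nat -> R) n : (forall i, (i <= n)%nat -> a i <= b i) -> sum_n a n <= sum_n b n.
Proof.
  induction n; intros H. rewrite !sum0; apply H; lia.
  rewrite !sumS. apply Rplus_le_compat. apply IHn; intros; apply H; lia. apply H; lia.
Qed.
Lemma sum_abs (a : nat -> R) n : Rabs (sum_n a n) <= sum_n (fun i => Rabs (a i)) n.
Proof.
  induction n. rewrite !sum0; lra.
  rewrite !sumS. eapply Rle_trans. apply Rabs_triang. lra.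
Qed.
Lemma sum_shift (a : nat -> R) n : @eq R (sum_n a (S n)) (a 0%nat + sum_n (fun i => a (S i)) n).
Proof.
  induction n. - rewrite sumS, !sum0. reflexivity.
  - rewrite sumS, IHn, sumS. ring.
Qed.
Lemma sum_pairs (a : nat -> R) n :
  @eq R (sum_n (fun i => a i + a (S i)) n) (2 * sum_n a (S n) - a 0%nat - a (S n)).
Proof.
  induction n. - rewrite sum0, sumS, sum0. ring.
  - rewrite sumS, IHn, (sumS a (S n)). ring.
Qed.

Definition ctn (phi : R -> R) := forall x, continuous phi x.

Lemma exr phi a b : ctn phi -> ex_RInt phi a b.
Proof. intros H. apply (@ex_RInt_continuous R_CompleteNormedModule). intros; apply H. Qed.

Lemma RInt_minusR phi psi a b : ctn phi -> ctn psi ->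
  RInt (fun y => phi y - psi y) a b = RInt phi a b - RInt psi a b.
Proof. intros H1 H2. apply (RInt_minus phi psi a b); apply exr; auto. Qed.
Lemma RInt_plusR phi psi a b : ctn phi -> ctn psi ->
  RInt (fun y => phi y + psi y) a b = RInt phi a b + RInt psi a b.
Proof. intros H1 H2. apply (RInt_plus phi psi a b); apply exr; auto. Qed.
Lemma RInt_scalR phi c a b : ctn phi ->
  RInt (fun y => c * phi y) a b = c * RInt phi a b.
Proof. intros H1. apply (RInt_scal phi a b c); apply exr; auto. Qed.
Lemma RInt_constR c a b : RInt (fun _ => c) a b = (b - a) * c.
Proof. apply (@RInt_const R_CompleteNormedModule). Qed.
Lemma ChaslesR phi a b c : ctn phi -> RInt phi a b + RInt phi b c = RInt phi a c.
Proof. intros H. apply (RInt_Chasles phi a b c); apply exr; auto. Qed.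

Definition RI (phi : R -> R) (a b : R) : R := RInt phi a b.

Lemma Chasles_sum phi (x : nat -> R) N : ctn phi ->
  RI phi (x 0%nat) (x (S N)) = sum_n (fun i => RI phi (x i) (x (S i))) N.
Proof.
  intros H. induction N.
  - rewrite sum0. reflexivity.
  - rewrite sumS, <- IHN. symmetry. apply ChaslesR; auto.
Qed.

Lemma ctn_comp_lin phi u v : ctn phi -> ctn (fun y => phi (u * y + v)).
Proof.
  intros H x. apply continuous_comp with (f := fun y => u * y + v) (g := phi).
  2: apply H.
  apply continuity_pt_filterlim. apply continuity_pt_plus.
  apply continuity_pt_scal. apply continuity_pt_id. apply continuity_pt_const. intros a b; auto.
Qed.

Lemma RI_shift phi c r : ctn phi -> RI phi c (c + r) = RI (fun s => phi (c + s)) 0 r.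
Proof.
  intros H. unfold RI.
  pose proof (RInt_comp_lin phi 1 c 0 r (exr _ _ _ H)) as E.
  replace (1 * 0 + c) with c in E by ring. replace (1 * r + c) with (c + r) in E by ring.
  rewrite <- E. apply RInt_ext. intros x _. unfold scal; simpl; unfold mult; simpl.
  f_equal; ring_simplify; f_equal; ring.
Qed.

Lemma RI_refl phi c r : ctn phi -> RI phi (c - r) c = RI (fun s => phi (c - s)) 0 r.
Proof.
  intros H. unfold RI.
  pose proof (RInt_comp_lin phi (-1) c 0 r (exr _ _ _ H)) as E.
  replace (-1 * 0 + c) with c in E by ring. replace (-1 * r + c) with (c - r) in E by ring.
  rewrite <- (opp_RInt_swap phi) by (apply exr; auto).
  rewrite <- E.
  rewrite <- (RInt_opp (V := R_CompleteNormedModule)).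
  2:{ apply exr. intros x. apply continuity_pt_filterlim.
      apply (continuity_pt_ext (fun y => -1 * phi (-1 * y + c))).
      intros; unfold scal; simpl; unfold mult; simpl; reflexivity.
      apply continuity_pt_scal. apply continuity_pt_filterlim. apply ctn_comp_lin; auto. }
  apply RInt_ext. intros x _. unfold scal, opp; simpl; unfold mult; simpl.
  replace (-1 * x + c) with (c - x) by ring. ring.
Qed.

Lemma ctn_shift phi c : ctn phi -> ctn (fun s => phi (c + s)).
Proof. intros H x. apply (continuous_ext (fun s => phi (1 * s + c))).
  intros; f_equal; ring. apply ctn_comp_lin; auto. Qed.
Lemma ctn_refl phi c : ctn phi -> ctn (fun s => phi (c - s)).
Proof. intros H x. apply (continuous_ext (fun s => phi (-1 * s + c))).
  intros; f_equal; ring. apply ctn_comp_lin; auto. Qed.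
Lemma ctn_plus phi psi : ctn phi -> ctn psi -> ctn (fun s => phi s + psi s).
Proof. intros H1 H2 x. apply continuity_pt_filterlim. apply continuity_pt_plus;
  apply continuity_pt_filterlim; [apply H1|apply H2]. Qed.
Lemma ctn_minus phi psi : ctn phi -> ctn psi -> ctn (fun s => phi s - psi s).
Proof. intros H1 H2 x. apply continuity_pt_filterlim. apply continuity_pt_minus;
  apply continuity_pt_filterlim; [apply H1|apply H2]. Qed.
Lemma ctn_const c : ctn (fun _ => c).
Proof. intros x. apply continuity_pt_filterlim. apply continuity_pt_const. intros a b; auto. Qed.

Definition Tr (phi : R -> R) (u v : R) : R := (v - u) * (phi u + phi v) / 2 - RI phi u v.

Lemma Tr_mid phi c r : ctn phi ->
  Tr phi (c - r) (c + r) =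
  RI (fun s => (phi (c - r) + phi (c + r)) - (phi (c - s) + phi (c + s))) 0 r.
Proof.
  intros H. unfold Tr.
  assert (E : RI phi (c - r) (c + r) = RI (fun s => phi (c - s) + phi (c + s)) 0 r).
  { unfold RI. rewrite <- (ChaslesR phi (c - r) c (c + r) H).
    fold (RI phi (c - r) c). fold (RI phi c (c + r)).
    rewrite RI_refl, RI_shift by auto. unfold RI. rewrite RInt_plusR; auto.
    apply ctn_refl; auto. apply ctn_shift; auto. }
  rewrite E. unfold RI. rewrite RInt_minusR.
  2: apply ctn_const. 2: apply ctn_plus; [apply ctn_refl|apply ctn_shift]; auto.
  rewrite RInt_constR. field.
Qed.

Lemma Tr_bound phi c r K : ctn phi -> 0 <= r ->
  (forall s, 0 <= s <= r -> Rabs ((phi (c - r) + phi (c + r)) - (phi (c - s) + phi (c + s))) <= K) ->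
  Rabs (Tr phi (c - r) (c + r)) <= r * K.
Proof.
  intros H Hr HK. rewrite Tr_mid by auto. unfold RI.
  replace (r * K) with ((r - 0) * K) by ring.
  apply abs_RInt_le_const; auto.
  apply exr. apply ctn_minus. apply ctn_const. apply ctn_plus; [apply ctn_refl|apply ctn_shift]; auto.
Qed.

Lemma Tr_nonneg phi c r : ctn phi -> 0 <= r ->
  (forall s, 0 <= s <= r -> phi (c - s) + phi (c + s) <= phi (c - r) + phi (c + r)) ->
  0 <= Tr phi (c - r) (c + r).
Proof.
  intros H Hr HK. rewrite Tr_mid by auto. unfold RI.
  apply RInt_ge_0; auto.
  apply exr. apply ctn_minus. apply ctn_const. apply ctn_plus; [apply ctn_refl|apply ctn_shift]; auto.
  intros x Hx. specialize (HK x ltac:(lra)). lra.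
Qed.

Definition nd (a H : R) (n i : nat) : R := a + INR i * H / INR n.

Definition epiece (phi : R -> R) (n : nat) (a H : R) : R :=
  H / (INR n + 1) * sum_n (fun i => phi (nd a H n i)) n - RI phi a (a + H).

Lemma decomp phi p a H : ctn phi ->
  epiece phi (S p) a H =
  / (INR (S p) + 1) * Tr phi a (a + H) +
  INR (S p) / (INR (S p) + 1) * sum_n (fun i => Tr phi (nd a H (S p) i) (nd a H (S p) (S i))) p.
Proof.
  intros Hc. unfold epiece.
  assert (Hn : 0 < INR (S p)) by (apply lt_0_INR; lia).
  assert (E0 : nd a H (S p) 0 = a) by (unfold nd; change (INR 0) with 0; field; lra).
  assert (E1 : nd a H (S p) (S p) = a + H) by (unfold nd; field; lra).
  assert (EI : RI phi a (a + H) = sum_n (fun i => RI phi (nd a H (S p) i) (nd a H (S p) (S i))) p).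
  { rewrite <- E0 at 1. rewrite <- E1. apply (Chasles_sum phi (nd a H (S p))); auto. }
  assert (ES : @eq R (sum_n (fun i => Tr phi (nd a H (S p) i) (nd a H (S p) (S i))) p)
     (H / INR (S p) / 2 * (2 * sum_n (fun i => phi (nd a H (S p) i)) (S p) - phi a - phi (a + H))
     - RI phi a (a + H))).
  { unfold Tr. rewrite sum_minus, <- EI.
    rewrite (sum_ext (fun i => (nd a H (S p) (S i) - nd a H (S p) i) * (phi (nd a H (S p) i) + phi (nd a H (S p) (S i))) / 2) (fun i => H / INR (S p) / 2 * (phi (nd a H (S p) i) + phi (nd a H (S p) (S i))))
      p ltac:(intros i _; cbv beta; unfold nd; rewrite (S_INR i); field; lra)).
    rewrite sum_scal, (sum_pairs (fun i => phi (nd a H (S p) i))), E0, E1. ring. }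
  rewrite ES. unfold Tr. field. lra.
Qed.

Lemma epiece_bound phi p a H : ctn phi ->
  Rabs (epiece phi (S p) a H) <=
  / (INR (S p) + 1) * Rabs (Tr phi a (a + H)) +
  INR (S p) / (INR (S p) + 1) * sum_n (fun i => Rabs (Tr phi (nd a H (S p) i) (nd a H (S p) (S i)))) p.
Proof.
  intros Hc. rewrite decomp by auto.
  assert (Hn : 0 < INR (S p)) by (apply lt_0_INR; lia).
  eapply Rle_trans. apply Rabs_triang.
  rewrite !Rabs_mult. apply Rplus_le_compat.
  - rewrite Rabs_right. lra. apply Rle_ge, Rlt_le, Rinv_0_lt_compat; lra.
  - rewrite (Rabs_right (_ / _)). apply Rmult_le_compat_l. 
    apply Rlt_le, Rdiv_lt_0_compat; lra. apply sum_abs.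
    apply Rle_ge, Rlt_le, Rdiv_lt_0_compat; lra.
Qed.

Definition Eerr (n m : nat) (phi : R -> R) : R := RInt phi 0 1 - Inm n m phi.

Lemma E_decomp phi p q : ctn phi ->
  Eerr (S p) (S q) phi = - sum_n (fun k => epiece phi (S p) (INR k / INR (S q)) (/ INR (S q))) q.
Proof.
  intros Hc. unfold Eerr, Inm, epiece.
  assert (Hn : 0 < INR (S p)) by (apply lt_0_INR; lia).
  assert (Hm : 0 < INR (S q)) by (apply lt_0_INR; lia).
  replace (S q - 1)%nat with q by lia.
  rewrite sum_minus.
  assert (EI : @eq R (RInt phi 0 1) (sum_n (fun k => RI phi (INR k / INR (S q)) (INR k / INR (S q) + / INR (S q))) q)).
  { pose proof (Chasles_sum phi (fun k => INR k / INR (S q)) q Hc) as C. cbv beta in C. change (INR 0) with 0 in C.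
    unfold RI in C |- *. replace 0 with (0 / INR (S q)) by (field; lra).
    replace 1 with (INR (S q) / INR (S q)) by (field; lra).
    rewrite C. apply sum_ext. intros i _. f_equal. rewrite S_INR. field. lra. }
  rewrite EI.
  rewrite <- sum_scal.
  assert (EN : forall k, (k <= q)%nat ->
     / (INR (S q) * (INR (S p) + 1)) *
     sum_n (fun i => phi ((INR (k + 1) * INR (S p) - INR (S p) + INR i) / (INR (S q) * INR (S p)))) (S p)
     = / INR (S q) / (INR (S p) + 1) * sum_n (fun i => phi (nd (INR k / INR (S q)) (/ INR (S q)) (S p) i)) (S p)).
  { intros k _. replace (/ INR (S q) / (INR (S p) + 1)) with (/ (INR (S q) * (INR (S p) + 1))) by (field; lra).
    f_equal. apply sum_ext. intros i _. f_equal. unfold nd. rewrite plus_INR. simpl (INR 1). field. lra. }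
  rewrite (sum_ext _ _ q EN). ring.
Qed.

Section Disc.
Variable a : nat -> R.
Variable w : R.
Definition Ad (N : nat) : R := sum_n a N - (INR N + 1) * (a 0%nat + a N) / 2.
Definition Bd (N : nat) : R := (INR N + 1) * a N - INR N * a (S N) - a 0%nat.
Definition Dd (k : nat) : R := a (pred k) - 2 * a k + a (S k).

Lemma Ad_S N : Ad (S N) = Ad N + Bd N / 2.
Proof. unfold Ad, Bd. rewrite sumS, S_INR. field. Qed.
Lemma Bd_S N : Bd (S N) = Bd N - INR (S N) * Dd (S N).
Proof. unfold Bd, Dd. simpl pred. rewrite !S_INR. ring. Qed.

Lemma Bd_bound K : (forall k, (1 <= k <= K)%nat -> Rabs (Dd k) <= w) ->
  forall N, (N <= K)%nat -> Rabs (Bd N) <= w * INR N * (INR N + 1) / 2.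
Proof.
  intros HD. induction N; intros HN.
  - unfold Bd. simpl. replace ((0 + 1) * a 0%nat - 0 * a 1%nat - a 0%nat) with 0 by ring.
    rewrite Rabs_R0. lra.
  - rewrite Bd_S. eapply Rle_trans. apply Rabs_triang.
    rewrite Rabs_Ropp, Rabs_mult, (Rabs_right (INR (S N))) by (apply Rle_ge, pos_INR).
    specialize (IHN ltac:(lia)). specialize (HD (S N) ltac:(lia)).
    pose proof (pos_INR (S N)) as P.
    assert (INR (S N) * Rabs (Dd (S N)) <= INR (S N) * w) by (apply Rmult_le_compat_l; auto).
    rewrite S_INR in *. nra.
Qed.

Lemma Ad_bound K : (forall k, (1 <= k <= K)%nat -> Rabs (Dd k) <= w) ->
  forall N, (N <= S K)%nat -> Rabs (Ad N) <= w * (INR N * INR N * INR N - INR N) / 12.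
Proof.
  intros HD. induction N; intros HN.
  - unfold Ad. simpl. rewrite sum0. replace (a 0%nat - (0 + 1) * (a 0%nat + a 0%nat) / 2) with 0 by field.
    rewrite Rabs_R0. lra.
  - rewrite Ad_S. eapply Rle_trans. apply Rabs_triang.
    specialize (IHN ltac:(lia)).
    pose proof (Bd_bound K HD N ltac:(lia)) as HB.
    assert (E2 : Rabs (Bd N / 2) = Rabs (Bd N) / 2).
    { unfold Rdiv. rewrite Rabs_mult, (Rabs_right (/ 2)) by lra. reflexivity. }
    rewrite E2. rewrite S_INR. nra.
Qed.
End Disc.

Lemma cells_sum phi p a H : ctn phi ->
  @eq R (sum_n (fun i => Tr phi (nd a H (S p) i) (nd a H (S p) (S i))) p)
     (H / INR (S p) / 2 * (2 * sum_n (fun i => phi (nd a H (S p) i)) (S p) - phi a - phi (a + H))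
     - RI phi a (a + H)).
Proof.
  intros Hc.
  assert (Hn : 0 < INR (S p)) by (apply lt_0_INR; lia).
  assert (E0 : nd a H (S p) 0 = a) by (unfold nd; change (INR 0) with 0; field; lra).
  assert (E1 : nd a H (S p) (S p) = a + H) by (unfold nd; field; lra).
  assert (EI : RI phi a (a + H) = sum_n (fun i => RI phi (nd a H (S p) i) (nd a H (S p) (S i))) p).
  { rewrite <- E0 at 1. rewrite <- E1. apply (Chasles_sum phi (nd a H (S p))); auto. }
  unfold Tr. rewrite sum_minus, <- EI.
  rewrite (sum_ext (fun i => (nd a H (S p) (S i) - nd a H (S p) i) * (phi (nd a H (S p) i) + phi (nd a H (S p) (S i))) / 2) (fun i => H / INR (S p) / 2 * (phi (nd a H (S p) i) + phi (nd a H (S p) (S i))))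
      p ltac:(intros i _; cbv beta; unfold nd; rewrite (S_INR i); field; lra)).
  rewrite sum_scal, (sum_pairs (fun i => phi (nd a H (S p) i))), E0, E1. ring.
Qed.

Lemma Tr_split phi p a H : ctn phi ->
  Tr phi a (a + H) = sum_n (fun i => Tr phi (nd a H (S p) i) (nd a H (S p) (S i))) p
     - H / INR (S p) * Ad (fun j => phi (nd a H (S p) j)) (S p).
Proof.
  intros Hc. rewrite cells_sum by auto.
  assert (Hn : 0 < INR (S p)) by (apply lt_0_INR; lia).
  assert (E0 : nd a H (S p) 0 = a) by (unfold nd; change (INR 0) with 0; field; lra).
  assert (E1 : nd a H (S p) (S p) = a + H) by (unfold nd; field; lra).
  unfold Ad, Tr. rewrite E0, E1. field. lra.
Qed.

Definition om_bound (phi : R -> R) (t w : R) : Prop :=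
  forall c s, I01 (c - s) -> I01 (c + s) -> Rabs s <= t ->
    Rabs (phi (c - s) - 2 * phi c + phi (c + s)) <= w.

Lemma om_w_nonneg phi t w : om_bound phi t w -> 0 <= t -> 0 <= w.
Proof.
  intros H Ht. specialize (H 0 0). rewrite Rminus_0_r, Rplus_0_r, Rabs_R0 in H.
  replace (phi 0 - 2 * phi 0 + phi 0) with 0 in H by ring. rewrite Rabs_R0 in H.
  apply H; unfold I01; lra.
Qed.

Lemma TR1 phi t w u v : ctn phi -> om_bound phi t w -> 0 <= u -> u <= v -> v <= 1 ->
  (v - u) / 2 <= t -> Rabs (Tr phi u v) <= (v - u) * w.
Proof.
  intros Hc Hw H1 H2 H3 Ht.
  set (c := (u + v) / 2). set (r := (v - u) / 2).
  replace u with (c - r) by (unfold c, r; field). replace v with (c + r) by (unfold c, r; field).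
  replace ((c + r - (c - r)) * w) with (r * (2 * w)) by ring.
  apply Tr_bound; auto. unfold r; lra.
  intros s Hs.
  replace (phi (c - r) + phi (c + r) - (phi (c - s) + phi (c + s))) with
    ((phi (c - r) - 2 * phi c + phi (c + r)) - (phi (c - s) - 2 * phi c + phi (c + s))) by ring.
  eapply Rle_trans. apply Rabs_triang. rewrite Rabs_Ropp.
  assert (Hr : Rabs r <= t) by (rewrite Rabs_right; unfold r in *; lra).
  assert (Hs' : Rabs s <= t) by (rewrite Rabs_right; unfold r in *; lra).
  pose proof (Hw c r ltac:(unfold I01, c, r; lra) ltac:(unfold I01, c, r; lra) Hr).
  pose proof (Hw c s ltac:(unfold I01, c, r in *; lra) ltac:(unfold I01, c, r in *; lra) Hs').
  lra.
Qed.

Lemma nd_range a H p i : 0 <= H -> (i <= S p)%nat ->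
  a <= nd a H (S p) i <= a + H.
Proof.
  intros HH Hi. unfold nd.
  assert (Hn : 0 < INR (S p)) by (apply lt_0_INR; lia).
  assert (Hle : INR i <= INR (S p)) by (apply le_INR; auto).
  pose proof (pos_INR i).
  split.
  - assert (0 <= INR i * H / INR (S p)) by (apply Rdiv_le_0_compat; [apply Rmult_le_pos|]; lra). lra.
  - assert (INR i * H / INR (S p) <= H).
    { apply (Rmult_le_reg_r (INR (S p))); auto. unfold Rdiv. rewrite Rmult_assoc, Rinv_l by lra. nra. }
    lra.
Qed.

Lemma nd_S a H p i : nd a H (S p) (S i) = nd a H (S p) i + H / INR (S p).
Proof. unfold nd. rewrite S_INR. assert (0 < INR (S p)) by (apply lt_0_INR; lia). field. lra. Qed.

Lemma TRN phi t w p a H : ctn phi -> om_bound phi t w -> 0 <= a -> 0 <= H -> a + H <= 1 ->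
  H / INR (S p) <= t ->
  Rabs (Tr phi a (a + H)) <= H * w * (1 + (INR (S p) * INR (S p) - 1) / 12).
Proof.
  intros Hc Hw Ha HH Hb Ht.
  assert (Hn : 0 < INR (S p)) by (apply lt_0_INR; lia).
  assert (Ht0 : 0 <= t) by (eapply Rle_trans; [|exact Ht]; apply Rdiv_le_0_compat; lra).
  assert (Hw0 := om_w_nonneg _ _ _ Hw Ht0).
  rewrite (Tr_split phi p a H Hc).
  eapply Rle_trans. apply Rabs_triang. rewrite Rabs_Ropp.
  replace (H * w * (1 + (INR (S p) * INR (S p) - 1) / 12)) with
    (H * w + H / INR (S p) * (w * (INR (S p) * INR (S p) * INR (S p) - INR (S p)) / 12)) by (field; lra).
  apply Rplus_le_compat.
  - eapply Rle_trans. apply sum_abs.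
    eapply Rle_trans. apply (sum_le _ (fun _ => H / INR (S p) * w)).
    { intros i Hi. rewrite nd_S.
      pose proof (nd_range a H p i HH ltac:(lia)).
      pose proof (nd_range a H p (S i) HH ltac:(lia)). rewrite nd_S in H1.
      replace (H / INR (S p) * w) with ((nd a H (S p) i + H / INR (S p) - nd a H (S p) i) * w) by ring.
      apply TR1 with t; auto; try lra.
      assert (0 <= H / INR (S p)) by (apply Rdiv_le_0_compat; lra). lra. }
    rewrite sum_const. right. field. lra.
  - rewrite Rabs_mult, Rabs_right by (apply Rle_ge, Rdiv_le_0_compat; lra).
    pose proof (Ad_bound (fun j => phi (nd a H (S p) j)) w p) as HA.
    assert (HD : forall k, (1 <= k <= p)%nat -> Rabs (Dd (fun j => phi (nd a H (S p) j)) k) <= w).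
    { intros k Hk. unfold Dd. destruct k as [|k]; [lia|]. simpl pred.
      rewrite (nd_S a H p (S k)), (nd_S a H p k).
      pose proof (nd_range a H p k HH ltac:(lia)).
      pose proof (nd_range a H p (S (S k)) HH ltac:(lia)).
      rewrite (nd_S a H p (S k)), (nd_S a H p k) in H1.
      set (x := nd a H (S p) k) in *. set (h := H / INR (S p)) in *.
      replace x with (x + h - h) at 1 by ring.
      replace (x + h + h) with ((x + h) + h) by ring.
      apply Hw. unfold I01; lra. unfold I01; lra.
      rewrite Rabs_right; [lra|]. apply Rle_ge. unfold h. apply Rdiv_le_0_compat; lra. }
    specialize (HA HD (S p) (le_n _)).
    apply Rmult_le_compat_l. apply Rdiv_le_0_compat; lra. exact HA.
Qed.

Lemma piece_ii phi t w p M a H : ctn phi -> om_bound phi t w -> 0 <= a -> 0 <= H -> a + H <= 1 ->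
  (INR (S M) * INR (S M) - 1) / 12 <= INR (S p) ->
  H / INR (S M) <= t ->
  ((1 <= p)%nat -> H / INR (S p) / 2 <= t) ->
  Rabs (epiece phi (S p) a H) <= 2 * H * w.
Proof.
  intros Hc Hw Ha HH Hb HN Ht Ht2.
  assert (Hn : 0 < INR (S p)) by (apply lt_0_INR; lia).
  assert (HM : 0 < INR (S M)) by (apply lt_0_INR; lia).
  assert (Ht0 : 0 <= t) by (eapply Rle_trans; [|exact Ht]; apply Rdiv_le_0_compat; lra).
  assert (Hw0 := om_w_nonneg _ _ _ Hw Ht0).
  pose proof (TRN phi t w M a H Hc Hw Ha HH Hb Ht) as HP.
  assert (HP' : Rabs (Tr phi a (a + H)) <= H * w * (1 + INR (S p))).
  { eapply Rle_trans. exact HP. apply Rmult_le_compat_l. apply Rmult_le_pos; lra. lra. }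
  eapply Rle_trans. apply epiece_bound; auto.
  destruct p as [|p].
  - rewrite sum0.
    assert (E0 : nd a H 1 0 = a) by (unfold nd; change (INR 0) with 0; change (INR 1) with 1; field).
    assert (E1 : nd a H 1 1 = a + H) by (unfold nd; change (INR 1) with 1; field).
    rewrite E0, E1. change (INR 1) with 1 in *.
    replace (/ (1 + 1) * Rabs (Tr phi a (a + H)) + 1 / (1 + 1) * Rabs (Tr phi a (a + H)))
      with (Rabs (Tr phi a (a + H))) by field. lra.
  - assert (HS : sum_n (fun i => Rabs (Tr phi (nd a H (S (S p)) i) (nd a H (S (S p)) (S i)))) (S p)
                 <= H * w).
    { eapply Rle_trans. apply (sum_le _ (fun _ => H / INR (S (S p)) * w)).
      { intros i Hi. rewrite nd_S.
        pose proof (nd_range a H (S p) i HH ltac:(lia)).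
        pose proof (nd_range a H (S p) (S i) HH ltac:(lia)). rewrite nd_S in H1.
        replace (H / INR (S (S p)) * w) with ((nd a H (S (S p)) i + H / INR (S (S p)) - nd a H (S (S p)) i) * w) by ring.
        assert (0 <= H / INR (S (S p))) by (apply Rdiv_le_0_compat; lra).
        apply TR1 with t; auto; try lra.
        specialize (Ht2 ltac:(lia)). lra. }
      rewrite sum_const. right. field. lra. }
    set (n := INR (S (S p))) in *.
    assert (Hx := Rabs_pos (Tr phi a (a + H))).
    assert (A1 : / (n + 1) * Rabs (Tr phi a (a + H)) <= H * w).
    { apply (Rmult_le_reg_l (n + 1)). lra. rewrite <- Rmult_assoc, Rinv_r by lra. lra. }
    assert (A2 : n / (n + 1) * sum_n (fun i => Rabs (Tr phi (nd a H (S (S p)) i) (nd a H (S (S p)) (S i)))) (S p) <= H * w).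
    { apply Rle_trans with (n / (n + 1) * (H * w)).
      apply Rmult_le_compat_l. apply Rlt_le, Rdiv_lt_0_compat; lra. auto.
      assert (0 <= H * w) by (apply Rmult_le_pos; lra).
      assert (n / (n + 1) <= 1). { apply (Rmult_le_reg_r (n + 1)); [lra|]. unfold Rdiv.
        rewrite Rmult_assoc, Rinv_l by lra. lra. }
      nra. }
    lra.
Qed.

Lemma is_derive_eq (f : R -> R) x l l' : is_derive f x l -> l = l' -> is_derive f x l'.
Proof. intros H ->; auto. Qed.

Lemma der_shift (h : R -> R) c x l : is_derive h (c + x) l -> is_derive (fun s => h (c + s)) x l.
Proof.
  intros H.
  assert (Hg : is_derive (fun s : R => c + s) x 1).
  { auto_derive; auto; ring. }
  apply is_derive_eq with (scal 1 l). apply (is_derive_comp h (fun s => c + s)); auto.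
  unfold scal; simpl; unfold mult; simpl; ring.
Qed.

Lemma der_refl (h : R -> R) c x l : is_derive h (c - x) l -> is_derive (fun s => h (c - s)) x (- l).
Proof.
  intros H.
  assert (Hg : is_derive (fun s : R => c - s) x (-1)).
  { auto_derive; auto; ring. }
  apply is_derive_eq with (scal (-1) l). apply (is_derive_comp h (fun s => c - s)); auto.
  unfold scal; simpl; unfold mult; simpl; ring.
Qed.

Lemma der_plusR (f g : R -> R) x a b : is_derive f x a -> is_derive g x b ->
  is_derive (fun y => f y + g y) x (a + b).
Proof. intros. apply (is_derive_plus f g); auto. Qed.

Lemma cont_of_ctn h x : ctn h -> continuity_pt h x.
Proof. intros H. apply continuity_pt_filterlim. apply H. Qed.

Lemma h1_mono h1 h2 c xi : ctn h1 ->
  (forall x, 0 < x < 1 -> is_derive h1 x (h2 x)) -> (forall x, I01 x -> 0 <= h2 x) ->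
  0 <= c - xi -> c + xi <= 1 -> 0 <= xi ->
  h1 (c - xi) <= h1 (c + xi).
Proof.
  intros Hc Hd Hp H1 H2 H3.
  destruct (MVT_gen h1 (c - xi) (c + xi) h2) as [z [Hz E]].
  - intros x Hx. apply Hd. rewrite Rmin_left, Rmax_right in Hx by lra. lra.
  - intros x Hx. apply cont_of_ctn; auto.
  - rewrite Rmin_left, Rmax_right in Hz by lra.
    assert (0 <= h2 z) by (apply Hp; unfold I01; lra). nra.
Qed.

Lemma psi_mono h h1 h2 c r s : ctn h -> ctn h1 ->
  (forall x, 0 < x < 1 -> is_derive h x (h1 x)) ->
  (forall x, 0 < x < 1 -> is_derive h1 x (h2 x)) -> (forall x, I01 x -> 0 <= h2 x) ->
  0 <= c - r -> c + r <= 1 -> 0 <= s <= r ->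
  h (c - s) + h (c + s) <= h (c - r) + h (c + r).
Proof.
  intros Hc Hc1 Hd Hd1 Hp H1 H2 Hs.
  destruct (Req_dec s r) as [->|Hsr]. lra.
  destruct (MVT_gen (fun x => h (c - x) + h (c + x)) s r (fun x => - h1 (c - x) + h1 (c + x)))
    as [z [Hz E]].
  - intros x Hx. rewrite Rmin_left, Rmax_right in Hx by lra.
    apply der_plusR. apply der_refl. apply Hd; lra. apply der_shift. apply Hd; lra.
  - intros x Hx. apply continuity_pt_plus.
    apply cont_of_ctn, ctn_refl; auto. apply cont_of_ctn, ctn_shift; auto.
  - rewrite Rmin_left, Rmax_right in Hz by lra.
    assert (h1 (c - z) <= h1 (c + z)) by (apply (h1_mono h1 h2); auto; lra).
    assert (0 <= (- h1 (c - z) + h1 (c + z)) * (r - s)) by (apply Rmult_le_pos; lra).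
    lra.
Qed.

Lemma Tr_lin f g (sg : R) u v : ctn f -> ctn g ->
  Tr (fun x => f x + sg * g x) u v = Tr f u v + sg * Tr g u v.
Proof.
  intros Hf Hg. unfold Tr, RI. rewrite RInt_plusR; auto.
  rewrite RInt_scalR; auto. field.
  intros x. apply continuity_pt_filterlim. apply continuity_pt_scal. apply cont_of_ctn; auto.
Qed.

Lemma ctn_quad M : ctn (fun x => M * x * x / 2).
Proof. intros x. apply continuity_pt_filterlim. apply derivable_continuous_pt.
  apply ex_derive_Reals_0. auto_derive. auto. Qed.
Lemma ctn_lin M : ctn (fun x => M * x).
Proof. intros x. apply continuity_pt_filterlim. apply derivable_continuous_pt.
  apply ex_derive_Reals_0. auto_derive. auto. Qed.

Lemma Tr_quad M u v : Tr (fun x => M * x * x / 2) u v = M * (v - u) ^ 3 / 12.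
Proof.
  unfold Tr, RI.
  rewrite (is_RInt_unique _ u v (minus ((fun x => M * x * x * x / 6) v) ((fun x => M * x * x * x / 6) u))).
  unfold minus, plus, opp; simpl. field.
  apply (is_RInt_derive (fun x => M * x * x * x / 6)).
  - intros x _. auto_derive. auto. field.
  - intros x _. apply ctn_quad.
Qed.

Lemma Tr_C2 phi phi1 phi2 M u v : ctn phi -> ctn phi1 ->
  (forall x, 0 < x < 1 -> is_derive phi x (phi1 x)) ->
  (forall x, 0 < x < 1 -> is_derive phi1 x (phi2 x)) ->
  (forall x, I01 x -> Rabs (phi2 x) <= M) ->
  0 <= u -> u <= v -> v <= 1 ->
  Rabs (Tr phi u v) <= M * (v - u) ^ 3 / 12.
Proof.
  intros Hc Hc1 Hd Hd1 HM Hu Huv Hv.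
  assert (key : forall sg, sg = 1 \/ sg = -1 -> 0 <= M * (v - u) ^ 3 / 12 + sg * Tr phi u v).
  { intros sg Hsg.
    rewrite <- Tr_quad. rewrite <- Tr_lin by (auto; apply ctn_quad).
    set (c := (u + v) / 2). set (r := (v - u) / 2).
    replace u with (c - r) by (unfold c, r; field). replace v with (c + r) by (unfold c, r; field).
    apply Tr_nonneg. apply ctn_plus. apply ctn_quad.
    intros x. apply continuity_pt_filterlim. apply continuity_pt_scal. apply cont_of_ctn; auto.
    unfold r; lra.
    intros s Hs.
    apply (psi_mono (fun x => M * x * x / 2 + sg * phi x) (fun x => M * x + sg * phi1 x) (fun x => M + sg * phi2 x) c r s).
    + apply ctn_plus. apply ctn_quad.
      intros x. apply continuity_pt_filterlim. apply continuity_pt_scal. apply cont_of_ctn; auto.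
    + apply ctn_plus. apply ctn_lin.
      intros x. apply continuity_pt_filterlim. apply continuity_pt_scal. apply cont_of_ctn; auto.
    + intros x Hx. apply der_plusR. auto_derive; auto; field.
      apply is_derive_scal. auto.
    + intros x Hx. apply der_plusR. auto_derive; auto; field.
      apply is_derive_scal. auto.
    + intros x Hx. specialize (HM x Hx). apply Rabs_le_between in HM.
      destruct Hsg as [-> | ->]; lra.
    + unfold c, r; lra.
    + unfold c, r; lra.
    + exact Hs. }
  pose proof (key 1 (or_introl eq_refl)). pose proof (key (-1) (or_intror eq_refl)).
  apply Rabs_le. lra.
Qed.

Lemma piece_i phi phi1 phi2 M p a H : ctn phi -> ctn phi1 ->
  (forall x, 0 < x < 1 -> is_derive phi x (phi1 x)) ->
  (forall x, 0 < x < 1 -> is_derive phi1 x (phi2 x)) ->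
  (forall x, I01 x -> Rabs (phi2 x) <= M) ->
  0 <= a -> 0 <= H -> a + H <= 1 ->
  Rabs (epiece phi (S p) a H) <= M * H ^ 3 / (12 * INR (S p)).
Proof.
  intros Hc Hc1 Hd Hd1 HM Ha HH Hb.
  assert (Hn : 0 < INR (S p)) by (apply lt_0_INR; lia).
  assert (HM0 : 0 <= M) by (eapply Rle_trans; [apply Rabs_pos| apply (HM 0); unfold I01; lra]).
  eapply Rle_trans. apply epiece_bound; auto.
  pose proof (Tr_C2 phi phi1 phi2 M a (a + H) Hc Hc1 Hd Hd1 HM Ha ltac:(lra) Hb) as HP.
  replace (a + H - a) with H in HP by ring.
  assert (HS : sum_n (fun i => Rabs (Tr phi (nd a H (S p) i) (nd a H (S p) (S i)))) p
               <= INR (S p) * (M * (H / INR (S p)) ^ 3 / 12)).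
  { rewrite <- sum_const. apply sum_le. intros i Hi. rewrite nd_S.
    pose proof (nd_range a H p i HH ltac:(lia)).
    pose proof (nd_range a H p (S i) HH ltac:(lia)). rewrite nd_S in H1.
    assert (0 <= H / INR (S p)) by (apply Rdiv_le_0_compat; lra).
    replace (H / INR (S p)) with (nd a H (S p) i + H / INR (S p) - nd a H (S p) i) at 2 by ring.
    apply (Tr_C2 phi phi1 phi2); auto; lra. }
  set (n := INR (S p)) in *.
  apply Rle_trans with (/ (n + 1) * (M * H ^ 3 / 12) + n / (n + 1) * (n * (M * (H / n) ^ 3 / 12))).
  - apply Rplus_le_compat. apply Rmult_le_compat_l. apply Rlt_le, Rinv_0_lt_compat; lra. auto.
    apply Rmult_le_compat_l. apply Rlt_le, Rdiv_lt_0_compat; lra. auto.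
  - right. field. lra.
Qed.

Lemma bounded01c phi : ctn (fun y => phi (cl y)) -> exists B, forall x, I01 x -> Rabs (phi x) <= B.
Proof.
  intros H.
  assert (Hc : forall c, 0 <= c <= 1 -> continuity_pt (fun y => phi (cl y)) c)
    by (intros; apply cont_of_ctn; auto).
  destruct (continuity_ab_maj _ 0 1 ltac:(lra) Hc) as [M [HM _]].
  destruct (continuity_ab_min _ 0 1 ltac:(lra) Hc) as [mi [Hm _]].
  exists (Rmax (Rabs (phi (cl M))) (Rabs (phi (cl mi)))).
  intros x Hx. specialize (HM x Hx). specialize (Hm x Hx). simpl in *.
  rewrite (cl_id x Hx) in HM, Hm.
  unfold Rmax, Rabs. repeat destruct Rle_dec; repeat destruct Rcase_abs; lra.
Qed.

Lemma supnorm_ge_c phi x : ctn (fun y => phi (cl y)) -> I01 x -> Rabs (phi x) <= supnorm01 phi.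
Proof.
  intros H Hx. destruct (bounded01c phi H) as [B HB]. unfold supnorm01.
  refine (proj1 (lub_real _ (Rabs (phi x)) B _ _)).
  - exists x; auto.
  - intros z [y [Hy ->]]. apply HB; auto.
Qed.

Lemma node_I01 p q k i : (k <= q)%nat -> (i <= S p)%nat ->
  I01 ((INR (k + 1) * INR (S p) - INR (S p) + INR i) / (INR (S q) * INR (S p))).
Proof.
  intros Hk Hi.
  assert (Hn : 0 < INR (S p)) by (apply lt_0_INR; lia).
  assert (Hm : 0 < INR (S q)) by (apply lt_0_INR; lia).
  replace (INR (k + 1) * INR (S p) - INR (S p) + INR i) with (INR k * INR (S p) + INR i)
    by (rewrite plus_INR; simpl (INR 1); ring).
  assert (Hk' : INR k <= INR q) by (apply le_INR; auto).
  assert (Hi' : INR i <= INR (S p)) by (apply le_INR; auto).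
  pose proof (pos_INR k). pose proof (pos_INR i). rewrite S_INR in Hm. rewrite (S_INR q).
  unfold I01. split.
  - apply Rdiv_le_0_compat. nra. nra.
  - apply Rle_div_l. apply Rmult_lt_0_compat; lra. nra.
Qed.

Lemma Inm_ext p q phi psi : (forall x, I01 x -> phi x = psi x) -> Inm (S p) (S q) phi = Inm (S p) (S q) psi.
Proof.
  intros H. unfold Inm. f_equal. apply sum_ext. intros k Hk. cbv zeta.
  apply sum_ext. intros i Hi. apply H. apply node_I01; lia.
Qed.

Lemma Inm_minus p q phi psi : Inm (S p) (S q) (fun x => phi x - psi x) = Inm (S p) (S q) phi - Inm (S p) (S q) psi.
Proof.
  unfold Inm. rewrite <- Rmult_minus_distr_l. f_equal. rewrite <- sum_minus.
  apply sum_ext. intros k Hk. cbv zeta. rewrite <- sum_minus. reflexivity.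
Qed.

Lemma Inm_bound p q phi Sb : (forall x, I01 x -> Rabs (phi x) <= Sb) -> Rabs (Inm (S p) (S q) phi) <= Sb.
Proof.
  intros H. unfold Inm.
  assert (Hn : 0 < INR (S p)) by (apply lt_0_INR; lia).
  assert (Hm : 0 < INR (S q)) by (apply lt_0_INR; lia).
  rewrite Rabs_mult, Rabs_right by (apply Rle_ge, Rlt_le, Rinv_0_lt_compat; nra).
  replace (S (S q) - 1)%nat with (S q) by lia. 
  replace (S q - 1)%nat with q by lia.
  apply Rle_trans with (/ (INR (S q) * (INR (S p) + 1)) * sum_n (fun _ => sum_n (fun _ => Sb) (S p)) q).
  - apply Rmult_le_compat_l. apply Rlt_le, Rinv_0_lt_compat; nra.
    eapply Rle_trans. apply sum_abs. apply sum_le. intros k Hk. cbv zeta.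
    eapply Rle_trans. apply sum_abs. apply sum_le. intros i Hi. apply H. apply node_I01; lia.
  - rewrite !sum_const. rewrite (S_INR (S p)). right. field. nra.
Qed.

Lemma Eerr_cl p q phi : Eerr (S p) (S q) phi = Eerr (S p) (S q) (fun x => phi (cl x)).
Proof.
  unfold Eerr. f_equal.
  - apply RInt_ext. intros x Hx. rewrite Rmin_left, Rmax_right in Hx by lra.
    rewrite cl_id; auto. unfold I01; lra.
  - apply Inm_ext. intros x Hx. rewrite cl_id; auto.
Qed.

Lemma Eerr_minus p q phi psi : ctn phi -> ctn psi ->
  Eerr (S p) (S q) (fun x => phi x - psi x) = Eerr (S p) (S q) phi - Eerr (S p) (S q) psi.
Proof.
  intros H1 H2. unfold Eerr. rewrite Inm_minus, RInt_minusR by auto. ring.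
Qed.

Lemma Eerr_bound0 p q phi Sb : ctn phi -> (forall x, I01 x -> Rabs (phi x) <= Sb) ->
  Rabs (Eerr (S p) (S q) phi) <= 2 * Sb.
Proof.
  intros Hc H. unfold Eerr.
  eapply Rle_trans. apply Rabs_triang. rewrite Rabs_Ropp.
  assert (Rabs (RInt phi 0 1) <= Sb).
  { replace Sb with ((1 - 0) * Sb) by ring. apply abs_RInt_le_const. lra. apply exr; auto.
    intros t Ht. apply H. exact Ht. }
  pose proof (Inm_bound p q phi Sb H). lra.
Qed.

Lemma E_sum_bound phi p q B : ctn phi ->
  (forall k, (k <= q)%nat -> Rabs (epiece phi (S p) (INR k / INR (S q)) (/ INR (S q))) <= B) ->
  Rabs (Eerr (S p) (S q) phi) <= INR (S q) * B.
Proof.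
  intros Hc H. rewrite E_decomp by auto. rewrite Rabs_Ropp.
  eapply Rle_trans. apply sum_abs. rewrite <- sum_const. apply sum_le. auto.
Qed.

Lemma piece_range q k : (k <= q)%nat ->
  0 <= INR k / INR (S q) /\ 0 <= / INR (S q) /\ INR k / INR (S q) + / INR (S q) <= 1.
Proof.
  intros Hk. assert (Hm : 0 < INR (S q)) by (apply lt_0_INR; lia).
  assert (INR k <= INR q) by (apply le_INR; auto). pose proof (pos_INR k).
  split; [|split].
  - apply Rdiv_le_0_compat; lra.
  - apply Rlt_le, Rinv_0_lt_compat; lra.
  - replace (INR k / INR (S q) + / INR (S q)) with ((INR k + 1) / INR (S q)) by (field; lra).
    apply Rle_div_l. lra. rewrite S_INR. lra.
Qed.

Lemma part_i p q f g g1 g2 : cont01 f -> C2_01 g g1 g2 ->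
  Rabs (Eerr (S p) (S q) f) / 2 <=
  supnorm01 (fun x => f x - g x) + / (24 * INR (S q) ^ 2 * INR (S p)) * supnorm01 g2.
Proof.
  intros Hf [Hg [Hg1 Hg2]].
  assert (Hn : 0 < INR (S p)) by (apply lt_0_INR; lia).
  assert (Hm : 0 < INR (S q)) by (apply lt_0_INR; lia).
  set (fc := fun x => f (cl x)). set (gc := fun x => g (cl x)). set (g1c := fun x => g1 (cl x)).
  assert (Cf : ctn fc) by (exact (cont_cl' f Hf)).
  assert (Cg : ctn gc) by (exact (cont_cl' g (deriv01_cont g g1 Hg))).
  assert (Cg1 : ctn g1c) by (exact (cont_cl' g1 (deriv01_cont g1 g2 Hg1))).
  set (Sn := supnorm01 (fun x => f x - g x)). set (M := supnorm01 g2).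
  rewrite Eerr_cl. fold fc.
  assert (E1 : Eerr (S p) (S q) fc = Eerr (S p) (S q) (fun x => fc x - gc x) + Eerr (S p) (S q) gc)
    by (rewrite Eerr_minus by auto; ring).
  assert (B1 : Rabs (Eerr (S p) (S q) (fun x => fc x - gc x)) <= 2 * Sn).
  { apply Eerr_bound0. apply ctn_minus; auto.
    intros x Hx. unfold fc, gc. rewrite cl_id by auto.
    apply (supnorm_ge_c (fun x => f x - g x)); auto. apply ctn_minus; auto. }
  assert (B2 : Rabs (Eerr (S p) (S q) gc) <= INR (S q) * (M * (/ INR (S q)) ^ 3 / (12 * INR (S p)))).
  { apply E_sum_bound; auto. intros k Hk. destruct (piece_range q k Hk) as [R1 [R2 R3]].
    apply (piece_i gc g1c g2); auto.
    - intros x Hx. unfold g1c. rewrite cl_id by (unfold I01; lra). apply deriv01_int; auto.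
    - intros x Hx. apply deriv01_int; auto.
    - intros x Hx. apply supnorm_ge; auto. }
  rewrite E1.
  assert (Rabs (Eerr (S p) (S q) (fun x => fc x - gc x) + Eerr (S p) (S q) gc) <=
          2 * Sn + INR (S q) * (M * (/ INR (S q)) ^ 3 / (12 * INR (S p)))).
  { eapply Rle_trans. apply Rabs_triang. lra. }
  replace (INR (S q) * (M * (/ INR (S q)) ^ 3 / (12 * INR (S p)))) with
    (2 * (/ (24 * INR (S q) ^ 2 * INR (S p)) * M)) in H by (field; lra).
  lra.
Qed.

Lemma part_ii p q f : cont01 f ->
  Rabs (Eerr (S p) (S q) f) <= 2 * omega2 f (/ (INR (S q) * sqrt (6 * INR (S p)))).
Proof.
  intros Hf.
  assert (Hn : 0 < INR (S p)) by (apply lt_0_INR; lia).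
  assert (Hm : 0 < INR (S q)) by (apply lt_0_INR; lia).
  set (t := / (INR (S q) * sqrt (6 * INR (S p)))).
  set (w := omega2 f t).
  assert (Hsq : 0 < sqrt (6 * INR (S p))) by (apply sqrt_lt_R0; lra).
  assert (Ht : 0 < t) by (apply Rinv_0_lt_compat; nra).
  set (fc := fun x => f (cl x)).
  assert (Cf : ctn fc) by (exact (cont_cl' f Hf)).
  assert (Hw : om_bound fc t w).
  { intros c s H1 H2 Hs. unfold fc.
    assert (I01 c) by (unfold I01 in *; lra).
    rewrite !cl_id by auto. apply omega2_ge; auto. }
  set (M := Nat.sqrt (6 * S p)).
  pose proof (Nat.sqrt_spec (6 * S p) ltac:(lia)) as [Sq1 Sq2]. fold M in Sq1, Sq2.
  assert (HN : (S M * S M <= 12 * S p + 1)%nat) by nia.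
  assert (A1 : (INR (S M) * INR (S M) - 1) / 12 <= INR (S p)).
  { rewrite <- mult_INR.
    assert (H12 : INR (S M * S M) <= INR (12 * S p + 1)) by (apply le_INR; lia).
    rewrite plus_INR, (mult_INR 12) in H12. change (INR 1) with 1 in H12.
    replace (INR 12) with 12 in H12 by (simpl; ring). lra. }
  assert (HNp : 0 < INR (S M)) by (apply lt_0_INR; lia).
  assert (A2 : / INR (S q) / INR (S M) <= t).
  { unfold t. replace (/ INR (S q) / INR (S M)) with (/ (INR (S q) * INR (S M))) by (field; lra).
    apply Rinv_le_contravar. nra. apply Rmult_le_compat_l. lra.
    rewrite <- (sqrt_square (INR (S M))) by lra. apply sqrt_le_1_alt.
    rewrite <- mult_INR. replace 6 with (INR 6) by (simpl; ring). rewrite <- mult_INR.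
    apply le_INR. lia. }
  assert (A3 : (1 <= p)%nat -> / INR (S q) / INR (S p) / 2 <= t).
  { intros Hp. unfold t.
    replace (/ INR (S q) / INR (S p) / 2) with (/ (INR (S q) * (2 * INR (S p)))) by (field; lra).
    apply Rinv_le_contravar. nra. apply Rmult_le_compat_l. lra.
    rewrite <- (sqrt_square (2 * INR (S p))) by lra. apply sqrt_le_1_alt.
    assert (1 <= INR p) by (apply (le_INR 1); auto). rewrite S_INR. nra. }
  rewrite Eerr_cl. fold fc.
  replace (2 * w) with (INR (S q) * (2 * / INR (S q) * w)) by (field; lra).
  apply E_sum_bound; auto. intros k Hk. destruct (piece_range q k Hk) as [R1 [R2 R3]].
  apply (piece_ii fc t w p M); auto.
Qed.

Lemma C2_zero : C2_01 (fun _ => 0) (fun _ => 0) (fun _ => 0).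
Proof.
  assert (D : has_deriv01 (fun _ => 0) (fun _ => 0)).
  { intros x Hx. apply filterlim_locally. intros eps.
    exists (mkposreal 1 Rlt_0_1). intros h _ _. apply ball_R.
    replace ((0 - 0) / h - 0) with 0 by (unfold Rdiv; ring). rewrite Rabs_R0. apply cond_pos. }
  split; [exact D|split; [exact D|]].
  intros x Hx. apply filterlim_locally. intros eps.
  exists (mkposreal 1 Rlt_0_1). intros y _ _. apply ball_R.
  rewrite Rminus_diag, Rabs_R0. apply cond_pos.
Qed.

Theorem mainTheorem6 (n m : nat) (f : R -> R) :
  (1 <= n)%nat -> (1 <= m)%nat -> cont01 f ->
  Rabs (RInt f 0 1 - Inm n m f)
    <= 2 * Kfun (/ (24 * INR m ^ 2 * INR n)) f
  /\
  Rabs (RInt f 0 1 - Inm n m f)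
    <= 9 / 4 * omega2 f (/ (INR m * sqrt (6 * INR n))).
Proof.
  intros Hn Hm Hf.
  destruct n as [|p]; [lia|]. destruct m as [|q]; [lia|].
  change (RInt f 0 1 - Inm (S p) (S q) f) with (Eerr (S p) (S q) f).
  split.
  - unfold Kfun.
    assert (Rabs (Eerr (S p) (S q) f) / 2 <= real (Glb_Rbar (fun v => exists g g1 g2, C2_01 g g1 g2 /\
          v = supnorm01 (fun x => f x - g x) + / (24 * INR (S q) ^ 2 * INR (S p)) * supnorm01 g2))).
    { apply (glb_real _ (supnorm01 (fun x => f x - 0) + / (24 * INR (S q) ^ 2 * INR (S p)) * supnorm01 (fun _ => 0))).
      - exists (fun _ => 0), (fun _ => 0), (fun _ => 0). split; [apply C2_zero|reflexivity].
      - intros z [g [g1 [g2 [Hg ->]]]]. apply (part_i p q f g g1 g2); auto. }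
    lra.
  - pose proof (part_ii p q f Hf) as H.
    assert (0 <= omega2 f (/ (INR (S q) * sqrt (6 * INR (S p))))).
    { apply omega2_nonneg; auto. apply Rlt_le, Rinv_0_lt_compat. apply Rmult_lt_0_compat.
      apply lt_0_INR; lia. apply sqrt_lt_R0. assert (0 < INR (S p)) by (apply lt_0_INR; lia). lra. }
    lra.
Qed.
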